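(* Let $\Lambda=[m,n]\cap\mathbb Z$, let $(\nu_j)$ be real, and let $m\le l\le r\le n$. Then for all $t\in\mathbb R$, $$\|[c_l(t),a_r^*]\|\ge|\langle e^{-2itH^\Lambda_{\rm eff}}\delta_l,\delta_r\rangle|,$$ where $c_l(t)=e^{itH_\Lambda}c_le^{-itH_\Lambda}$.
   Context: $\mathfrak G_\Lambda=\bigotimes_{j=m}^n\mathbb C^2$; $\sigma_j^{x,y,z}$ are the Pauli matrices $\begin{pmatrix}0&1\\1&0\end{pmatrix},\begin{pmatrix}0&-i\\i&0\end{pmatrix},\begin{pmatrix}1&0\\0&-1\end{pmatrix}$ acting on factor $j$. $H_\Lambda=-\sum_{j=m}^{n-1}(\sigma^x_j\sigma^x_{j+1}+\sigma^y_j\sigma^y_{j+1})-\sum_{j=m}^n\nu_j\sigma^z_j$. Define $a_j^*=\frac12(\sigma^x_j+i\sigma^y_j)$, $a_j=\frac12(\sigma^x_j-i\sigma^y_j)$, and the Jordan–Wigner operators $c_m=a_m$, $c_{m+j}=\sigma^z_m\sigma^z_{m+1}\cdots\sigma^z_{m+j-1}a_{m+j}$ for $1\le j\le n-m$. $H^\Lambda_{\rm eff}$ is the restriction of $(H_{\rm eff}\psi)_k=\psi_{k+1}+\psi_{k-1}+\nu_k\psi_k$ to $\ell^2([m,n]\cap\mathbb Z)$ (Dirichlet truncation), and $\delta_j$ are the standard basis vectors. *)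

(* Defs.v *)
From Stdlib Require Import Reals ZArith Arith ClassicalEpsilon.
Open Scope R_scope.

Record C := mkC { Cre : R; Cim : R }.
Definition C0 : C := mkC 0 0.
Definition C1 : C := mkC 1 0.
Definition Ci : C := mkC 0 1.
Definition RtoC (r : R) : C := mkC r 0.
Definition Cadd (x y : C) : C := mkC (Cre x + Cre y) (Cim x + Cim y).
Definition Copp (x : C) : C := mkC (- Cre x) (- Cim x).
Definition Csub (x y : C) : C := Cadd x (Copp y).
Definition Cmul (x y : C) : C :=
  mkC (Cre x * Cre y - Cim x * Cim y) (Cre x * Cim y + Cim x * Cre y).
Definition Cconj (x : C) : C := mkC (Cre x) (- Cim x).
Definition Cmod (x : C) : R := sqrt (Cre x ^ 2 + Cim x ^ 2).

Fixpoint Csum (N : nat) (f : nat -> C) : C :=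
  match N with O => C0 | S N' => Cadd (Csum N' f) (f N') end.
Fixpoint Rsumn (N : nat) (f : nat -> R) : R :=
  match N with O => 0 | S N' => Rsumn N' f + f N' end.

Definition Mat := nat -> nat -> C.
Definition Vec := nat -> C.
Definition Mid : Mat := fun i j => if Nat.eqb i j then C1 else C0.
Definition Madd (A B : Mat) : Mat := fun i j => Cadd (A i j) (B i j).
Definition Mopp (A : Mat) : Mat := fun i j => Copp (A i j).
Definition Msub (A B : Mat) : Mat := Madd A (Mopp B).
Definition Mscale (c : C) (A : Mat) : Mat := fun i j => Cmul c (A i j).
Definition Mmul (d : nat) (A B : Mat) : Mat :=
  fun i j => Csum d (fun k => Cmul (A i k) (B k j)).
Fixpoint Mpow (d : nat) (A : Mat) (k : nat) : Mat :=
  match k with O => Mid | S k' => Mmul d (Mpow d A k') A end.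
Fixpoint Msumn (N : nat) (f : nat -> Mat) : Mat :=
  match N with O => (fun _ _ => C0) | S N' => Madd (Msumn N' f) (f N') end.
Definition Mcomm (d : nat) (A B : Mat) : Mat := Msub (Mmul d A B) (Mmul d B A).
Definition Mapply (d : nat) (A : Mat) (v : Vec) : Vec :=
  fun i => Csum d (fun k => Cmul (A i k) (v k)).
Definition vnorm (d : nat) (v : Vec) : R :=
  sqrt (Rsumn d (fun i => Cmod (v i) ^ 2)).
Definition inner (d : nat) (u v : Vec) : C :=
  Csum d (fun i => Cmul (Cconj (u i)) (v i)).
Definition delta (p : nat) : Vec := fun i => if Nat.eqb i p then C1 else C0.

Definition Rlim (u : nat -> R) : R := epsilon (inhabits 0) (fun l => Un_cv u l).
Definition Clim (u : nat -> C) : C :=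
  mkC (Rlim (fun N => Cre (u N))) (Rlim (fun N => Cim (u N))).
Definition Rsup (P : R -> Prop) : R := epsilon (inhabits 0) (fun l => is_lub P l).

Definition Mexp (d : nat) (A : Mat) : Mat :=
  fun i j => Clim (fun N => Csum N (fun k => Cmul (RtoC (/ INR (fact k))) (Mpow d A k i j))).

Definition opnorm (d : nat) (A : Mat) : R :=
  Rsup (fun x => exists v : Vec, vnorm d v = 1 /\ x = vnorm d (Mapply d A v)).

Definition nsites (m n : Z) : nat := Z.to_nat (n - m + 1).
Definition hdim (m n : Z) : nat := 2 ^ nsites m n.
Definition loc (m j : Z) : nat := Z.to_nat (j - m).

(* 2x2 matrices, index false = first basis vector, true = second *)
Definition Mat2 := bool -> bool -> C.
Definition sx : Mat2 := fun x y => if xorb x y then C1 else C0.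
Definition sy : Mat2 := fun x y =>
  match x, y with false, true => Copp Ci | true, false => Ci | _, _ => C0 end.
Definition sz : Mat2 := fun x y =>
  match x, y with false, false => C1 | true, true => Copp C1 | _, _ => C0 end.

(* basis state a < d of the tensor product: bit k of a = state of site m+k.
   site_op d k P = P acting on tensor factor k. *)
Definition site_op (d k : nat) (P : Mat2) : Mat := fun a b =>
  if (Nat.ltb a d && Nat.ltb b d && Nat.eqb (Nat.clearbit a k) (Nat.clearbit b k))%bool
  then P (Nat.testbit a k) (Nat.testbit b k) else C0.

Definition sigx (m n j : Z) : Mat := site_op (hdim m n) (loc m j) sx.
Definition sigy (m n j : Z) : Mat := site_op (hdim m n) (loc m j) sy.
Definition sigz (m n j : Z) : Mat := site_op (hdim m n) (loc m j) sz.

Definition adag (m n j : Z) : Mat :=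
  Mscale (RtoC (1/2)) (Madd (sigx m n j) (Mscale Ci (sigy m n j))).
Definition aop (m n j : Z) : Mat :=
  Mscale (RtoC (1/2)) (Msub (sigx m n j) (Mscale Ci (sigy m n j))).

Fixpoint zstring (m n : Z) (k : nat) : Mat :=
  match k with
  | O => Mid
  | S k' => Mmul (hdim m n) (zstring m n k') (sigz m n (m + Z.of_nat k'))
  end.
Definition cJW (m n j : Z) : Mat := Mmul (hdim m n) (zstring m n (loc m j)) (aop m n j).

Definition Hchain (m n : Z) (nu : Z -> R) : Mat :=
  let d := hdim m n in
  Mopp (Madd
    (Msumn (nsites m n - 1) (fun k =>
       let j := (m + Z.of_nat k)%Z in
       Madd (Mmul d (sigx m n j) (sigx m n (j + 1)))
            (Mmul d (sigy m n j) (sigy m n (j + 1)))))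
    (Msumn (nsites m n) (fun k =>
       let j := (m + Z.of_nat k)%Z in
       Mscale (RtoC (nu j)) (sigz m n j)))).

Definition c_t (m n : Z) (nu : Z -> R) (l : Z) (t : R) : Mat :=
  let d := hdim m n in
  Mmul d (Mmul d (Mexp d (Mscale (mkC 0 t) (Hchain m n nu))) (cJW m n l))
         (Mexp d (Mscale (mkC 0 (- t)) (Hchain m n nu))).

(* H_eff^Lambda on l^2([m,n] ∩ Z), local index p <-> site m+p:
   (H ψ)_k = ψ_{k+1} + ψ_{k-1} + ν_k ψ_k, Dirichlet truncation *)
Definition Heff (m n : Z) (nu : Z -> R) : Mat := fun p q =>
  let L := nsites m n in
  if (Nat.ltb p L && Nat.ltb q L)%bool then
    (if Nat.eqb p q then RtoC (nu (m + Z.of_nat p)%Z)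
     else if (Nat.eqb p (S q) || Nat.eqb q (S p))%bool then C1 else C0)
  else C0.

(* Main.v *)
Require Import Defs.
From Stdlib Require Import Reals ZArith Lra Lia Psatz Arith Bool FunctionalExtensionality ClassicalEpsilon.
Import Defs.
Open Scope R_scope.

Lemma Cext (x y : C) : Cre x = Cre y -> Cim x = Cim y -> x = y.
Proof. destruct x, y; simpl; intros; subst; reflexivity. Qed.
Ltac Cring := apply Cext; simpl; first [ring | field].

Lemma Cre_Csum N f : Cre (Csum N f) = Rsumn N (fun i => Cre (f i)).
Proof. induction N; simpl; auto. rewrite IHN; auto. Qed.
Lemma Cim_Csum N f : Cim (Csum N f) = Rsumn N (fun i => Cim (f i)).
Proof. induction N; simpl; auto. rewrite IHN; auto. Qed.

Lemma Csum_ext N f g : (forall i, (i < N)%nat -> f i = g i) -> Csum N f = Csum N g.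
Proof. induction N; simpl; intros; auto. rewrite IHN, H; auto. Qed.
Lemma Rsumn_ext N f g : (forall i, (i < N)%nat -> f i = g i) -> Rsumn N f = Rsumn N g.
Proof. induction N; simpl; intros; auto. rewrite IHN, H; auto. Qed.
Lemma Csum_add N f g : Csum N (fun i => Cadd (f i) (g i)) = Cadd (Csum N f) (Csum N g).
Proof. induction N; simpl. Cring. rewrite IHN. Cring. Qed.
Lemma Csum_scal N c f : Csum N (fun i => Cmul c (f i)) = Cmul c (Csum N f).
Proof. induction N; simpl. Cring. rewrite IHN. Cring. Qed.
Lemma Csum_scal_r N c f : Csum N (fun i => Cmul (f i) c) = Cmul (Csum N f) c.
Proof. induction N; simpl. Cring. rewrite IHN. Cring. Qed.
Lemma Csum_zero N : Csum N (fun _ => C0) = C0.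
Proof. induction N; simpl; auto. rewrite IHN. Cring. Qed.
Lemma Csum_swap N M f : Csum N (fun i => Csum M (fun j => f i j)) = Csum M (fun j => Csum N (fun i => f i j)).
Proof. induction N; simpl. rewrite Csum_zero; auto. rewrite IHN, <- Csum_add; auto. Qed.
Lemma Csum_delta N p g : Csum N (fun i => if Nat.eqb i p then g i else C0) = if Nat.ltb p N then g p else C0.
Proof. induction N; simpl; auto. rewrite IHN.
  destruct (Nat.eqb_spec N p); destruct (Nat.ltb_spec p N); destruct (Nat.ltb_spec p (S N)); subst; try lia; try Cring. Qed.
Lemma Csum_delta' N p g : Csum N (fun i => if Nat.eqb p i then g i else C0) = if Nat.ltb p N then g p else C0.
Proof. rewrite <- Csum_delta. apply Csum_ext; intros. rewrite Nat.eqb_sym; auto. Qed.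
Lemma Csum_shift N f : Csum (S N) f = Cadd (f 0%nat) (Csum N (fun i => f (S i))).
Proof. induction N. simpl. Cring. change (Csum (S (S N)) f) with (Cadd (Csum (S N) f) (f (S N))).
  rewrite IHN. simpl. Cring. Qed.
Lemma Rsumn_add N f g : Rsumn N (fun i => f i + g i) = Rsumn N f + Rsumn N g.
Proof. induction N; simpl. ring. rewrite IHN. ring. Qed.
Lemma Rsumn_scal N c f : Rsumn N (fun i => c * f i) = c * Rsumn N f.
Proof. induction N; simpl. ring. rewrite IHN. ring. Qed.
Lemma Rsumn_le N f g : (forall i, (i < N)%nat -> f i <= g i) -> Rsumn N f <= Rsumn N g.
Proof. induction N; simpl; intros. lra. assert (f N <= g N) by auto. assert (Rsumn N f <= Rsumn N g) by auto. lra. Qed.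
Lemma Rsumn_nonneg N f : (forall i, (i < N)%nat -> 0 <= f i) -> 0 <= Rsumn N f.
Proof. intros. replace 0 with (Rsumn N (fun _ => 0)). apply Rsumn_le; auto.
  induction N; simpl; auto. rewrite IHN; auto. ring. Qed.
Lemma Rsumn_swap N M f : Rsumn N (fun i => Rsumn M (fun j => f i j)) = Rsumn M (fun j => Rsumn N (fun i => f i j)).
Proof. induction N; simpl. induction M; simpl; auto. rewrite <- IHM; ring. rewrite IHN, <- Rsumn_add; auto. Qed.
Lemma Rsumn_shift N f : Rsumn (S N) f = f 0%nat + Rsumn N (fun i => f (S i)).
Proof. induction N. simpl. ring. change (Rsumn (S (S N)) f) with (Rsumn (S N) f + f (S N)).
  rewrite IHN. simpl. ring. Qed.
Lemma Rsumn_term_le N f k : (forall i, (i < N)%nat -> 0 <= f i) -> (k < N)%nat -> f k <= Rsumn N f.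
Proof. induction N; intros; simpl. lia. destruct (Nat.eq_dec k N). subst.
  assert (0 <= Rsumn N f) by (apply Rsumn_nonneg; auto). lra.
  assert (f k <= Rsumn N f) by (apply IHN; auto; lia). assert (0 <= f N) by auto. lra. Qed.

Definition Vadd (u v : Vec) : Vec := fun i => Cadd (u i) (v i).
Definition Vscale (c : C) (v : Vec) : Vec := fun i => Cmul c (v i).
Definition Vzero : Vec := fun _ => C0.
Definition Vsum (N : nat) (f : nat -> Vec) : Vec := fun i => Csum N (fun k => f k i).

Lemma Mapply_add d A B v : Mapply d (Madd A B) v = Vadd (Mapply d A v) (Mapply d B v).
Proof. extensionality i. unfold Mapply, Vadd, Madd. rewrite <- Csum_add. apply Csum_ext; intros. Cring. Qed.
Lemma Mapply_opp d A v : Mapply d (Mopp A) v = Vscale (Copp C1) (Mapply d A v).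
Proof. extensionality i. unfold Mapply, Vscale, Mopp. rewrite <- Csum_scal. apply Csum_ext; intros. Cring. Qed.
Lemma Mapply_scale d c A v : Mapply d (Mscale c A) v = Vscale c (Mapply d A v).
Proof. extensionality i. unfold Mapply, Vscale, Mscale. rewrite <- Csum_scal. apply Csum_ext; intros. Cring. Qed.
Lemma Mapply_msum d N f v : Mapply d (Msumn N f) v = Vsum N (fun k => Mapply d (f k) v).
Proof. extensionality i. unfold Vsum. induction N; simpl. unfold Mapply. transitivity (Csum d (fun _ => C0)). apply Csum_ext; intros. Cring. apply Csum_zero.
  rewrite <- IHN. unfold Mapply, Madd. rewrite <- Csum_add. apply Csum_ext; intros. Cring. Qed.
Lemma Mapply_mul d A B v : Mapply d (Mmul d A B) v = Mapply d A (Mapply d B v).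
Proof. extensionality i. unfold Mapply, Mmul.
  transitivity (Csum d (fun k => Csum d (fun p => Cmul (A i p) (Cmul (B p k) (v k))))).
  apply Csum_ext; intros. rewrite <- Csum_scal_r. apply Csum_ext; intros. Cring.
  rewrite Csum_swap. apply Csum_ext; intros. rewrite <- Csum_scal. auto. Qed.
Lemma Mapply_vadd d A u v : Mapply d A (Vadd u v) = Vadd (Mapply d A u) (Mapply d A v).
Proof. extensionality i. unfold Mapply, Vadd. rewrite <- Csum_add. apply Csum_ext; intros. Cring. Qed.
Lemma Mapply_vscale d A c v : Mapply d A (Vscale c v) = Vscale c (Mapply d A v).
Proof. extensionality i. unfold Mapply, Vscale. rewrite <- Csum_scal. apply Csum_ext; intros. Cring. Qed.
Lemma Mapply_vzero d A : Mapply d A Vzero = Vzero.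
Proof. extensionality i. unfold Mapply, Vzero. transitivity (Csum d (fun _ => C0)). apply Csum_ext; intros. Cring. apply Csum_zero. Qed.
Lemma Mapply_vsum d A N f : Mapply d A (Vsum N f) = Vsum N (fun k => Mapply d A (f k)).
Proof. extensionality i. unfold Mapply, Vsum.
  transitivity (Csum d (fun p => Csum N (fun k => Cmul (A i p) (f k p)))).
  apply Csum_ext; intros. rewrite Csum_scal; auto. apply Csum_swap. Qed.
Lemma Mapply_delta d A b : (b < d)%nat -> Mapply d A (delta b) = fun a => A a b.
Proof. intros. extensionality a. unfold Mapply, delta.
  transitivity (Csum d (fun k => if Nat.eqb k b then A a k else C0)).
  apply Csum_ext; intros k _. destruct (Nat.eqb k b); Cring.
  rewrite Csum_delta. apply Nat.ltb_lt in H. rewrite H; auto. Qed.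


Lemma lt_pow2_bits a N : (a < 2^N)%nat <-> forall m, (N <= m)%nat -> Nat.testbit a m = false.
Proof. split; intros.
  - rewrite Nat.testbit_eqb. assert (a < 2^m)%nat.
    { apply Nat.lt_le_trans with (2^N)%nat; auto. apply Nat.pow_le_mono_r; lia. }
    rewrite Nat.div_small; auto.
  - assert (a = a mod 2^N)%nat.
    { apply Nat.bits_inj; intro m. destruct (Nat.lt_ge_cases m N).
      rewrite Nat.mod_pow2_bits_low; auto. rewrite Nat.mod_pow2_bits_high; auto. }
    rewrite H0. apply Nat.mod_upper_bound. apply Nat.pow_nonzero; lia. Qed.

Definition upd (b k : nat) (x : bool) : nat := if x then Nat.setbit b k else Nat.clearbit b k.
Lemma testbit_upd b k x m : Nat.testbit (upd b k x) m = if Nat.eqb k m then x else Nat.testbit b m.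
Proof. unfold upd; destruct x. rewrite Nat.setbit_eqb. destruct (Nat.eqb k m); auto.
  rewrite Nat.clearbit_eqb. destruct (Nat.eqb k m); simpl; auto. apply andb_false_r. apply andb_true_r. Qed.
Lemma upd_lt N b k x : (b < 2^N)%nat -> (k < N)%nat -> (upd b k x < 2^N)%nat.
Proof. intros. rewrite lt_pow2_bits in *. intros. rewrite testbit_upd.
  destruct (Nat.eqb_spec k m); try lia. auto. Qed.
Lemma bits_eq a b : (forall m, Nat.testbit a m = Nat.testbit b m) -> a = b.
Proof. intros; apply Nat.bits_inj; intro; auto. Qed.
Lemma upd_same b k : upd b k (Nat.testbit b k) = b.
Proof. apply bits_eq; intro m. rewrite testbit_upd. destruct (Nat.eqb_spec k m); subst; auto. Qed.

Lemma sop_entry N k P a b : (k < N)%nat -> (b < 2^N)%nat ->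
  site_op (2^N) k P a b = Cadd (Cmul (P false (Nat.testbit b k)) (delta (upd b k false) a))
                              (Cmul (P true (Nat.testbit b k)) (delta (upd b k true) a)).
Proof. intros Hk Hb. unfold site_op, delta.
  assert (Hne : upd b k false <> upd b k true).
  { intro E. assert (Nat.testbit (upd b k false) k = Nat.testbit (upd b k true) k) by (rewrite E; auto).
    rewrite !testbit_upd, Nat.eqb_refl in H. discriminate. }
  destruct (Nat.eqb_spec a (upd b k false)).
  - subst. destruct (Nat.eqb_spec (upd b k false) (upd b k true)); try tauto.
    assert (Hl : (upd b k false < 2^N)%nat) by (apply upd_lt; auto).
    apply Nat.ltb_lt in Hl. apply Nat.ltb_lt in Hb. rewrite Hl, Hb.
    replace (Nat.clearbit (upd b k false) k) with (Nat.clearbit b k).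
    rewrite Nat.eqb_refl. cbn [andb]. rewrite testbit_upd, Nat.eqb_refl. Cring.
    apply bits_eq; intro m. rewrite !Nat.clearbit_eqb, testbit_upd. destruct (Nat.eqb k m); simpl; auto.
    rewrite !andb_false_r; auto.
  - destruct (Nat.eqb_spec a (upd b k true)).
    + subst.
      assert (Hl : (upd b k true < 2^N)%nat) by (apply upd_lt; auto).
      apply Nat.ltb_lt in Hl. apply Nat.ltb_lt in Hb. rewrite Hl, Hb.
      replace (Nat.clearbit (upd b k true) k) with (Nat.clearbit b k).
      rewrite Nat.eqb_refl. cbn [andb]. rewrite testbit_upd, Nat.eqb_refl. Cring.
      apply bits_eq; intro m. rewrite !Nat.clearbit_eqb, testbit_upd. destruct (Nat.eqb k m); simpl; auto.
      rewrite !andb_false_r; auto.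
    + destruct (Nat.eqb_spec (Nat.clearbit a k) (Nat.clearbit b k)).
      * exfalso. assert (a = upd b k (Nat.testbit a k)).
        { apply bits_eq; intro m. rewrite testbit_upd. destruct (Nat.eqb_spec k m). subst; auto.
          assert (Nat.testbit (Nat.clearbit a k) m = Nat.testbit (Nat.clearbit b k) m) by (rewrite e; auto).
          rewrite !Nat.clearbit_eqb in H. apply Nat.eqb_neq in n1. rewrite n1 in H. simpl in H.
          rewrite !andb_true_r in H. auto. }
        destruct (Nat.testbit a k); auto.
      * rewrite andb_false_r. Cring. Qed.

Lemma sop_ev N k P b : (k < N)%nat -> (b < 2^N)%nat ->
  Mapply (2^N) (site_op (2^N) k P) (delta b) =
  Vadd (Vscale (P false (Nat.testbit b k)) (delta (upd b k false)))
       (Vscale (P true (Nat.testbit b k)) (delta (upd b k true))).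
Proof. intros. rewrite Mapply_delta; auto. extensionality a. rewrite sop_entry; auto. Qed.

Definition flip b k := upd b k (negb (Nat.testbit b k)).

Lemma sx_ev N k b : (k < N)%nat -> (b < 2^N)%nat ->
  Mapply (2^N) (site_op (2^N) k sx) (delta b) = delta (flip b k).
Proof. intros. rewrite sop_ev; auto. extensionality a. unfold Vadd, Vscale, flip, sx.
  destruct (Nat.testbit b k); simpl; Cring. Qed.
Definition cy (x : bool) : C := if x then Copp Ci else Ci.
Lemma sy_ev N k b : (k < N)%nat -> (b < 2^N)%nat ->
  Mapply (2^N) (site_op (2^N) k sy) (delta b) = Vscale (cy (Nat.testbit b k)) (delta (flip b k)).
Proof. intros. rewrite sop_ev; auto. extensionality a. unfold Vadd, Vscale, flip, sy, cy.
  destruct (Nat.testbit b k); simpl; Cring. Qed.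
Definition cz (x : bool) : C := if x then Copp C1 else C1.
Lemma sz_ev N k b : (k < N)%nat -> (b < 2^N)%nat ->
  Mapply (2^N) (site_op (2^N) k sz) (delta b) = Vscale (cz (Nat.testbit b k)) (delta b).
Proof. intros. rewrite sop_ev; auto. extensionality a. unfold Vadd, Vscale, sz, cz.
  pose proof (upd_same b k). destruct (Nat.testbit b k) eqn:E; rewrite H1; Cring. Qed.
Lemma flip_lt N b k : (b < 2^N)%nat -> (k < N)%nat -> (flip b k < 2^N)%nat.
Proof. intros; apply upd_lt; auto. Qed.
Lemma testbit_flip b k m : Nat.testbit (flip b k) m = if Nat.eqb k m then negb (Nat.testbit b k) else Nat.testbit b m.
Proof. apply testbit_upd. Qed.


Definition XX N k := Madd (Mmul (2^N) (site_op (2^N) k sx) (site_op (2^N) (S k) sx))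
                          (Mmul (2^N) (site_op (2^N) k sy) (site_op (2^N) (S k) sy)).
Definition Hab (N : nat) (w : nat -> R) : Mat :=
  Mopp (Madd (Msumn (N - 1) (fun k => XX N k))
             (Msumn N (fun k => Mscale (RtoC (w k)) (site_op (2^N) k sz)))).

Lemma loc_add m k : loc m (m + Z.of_nat k) = k.
Proof. unfold loc. replace (m + Z.of_nat k - m)%Z with (Z.of_nat k) by lia. apply Nat2Z.id. Qed.
Lemma loc_add1 m k : loc m (m + Z.of_nat k + 1) = S k.
Proof. unfold loc. replace (m + Z.of_nat k + 1 - m)%Z with (Z.of_nat (S k)) by lia. apply Nat2Z.id. Qed.

Lemma Hchain_eq m n nu : Hchain m n nu = Hab (nsites m n) (fun k => nu (m + Z.of_nat k)%Z).
Proof. unfold Hchain, Hab, XX, sigx, sigy, sigz, hdim. cbv zeta. f_equal. f_equal.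
  - f_equal. extensionality k. rewrite loc_add, loc_add1. reflexivity.
  - f_equal. extensionality k. rewrite loc_add. reflexivity. Qed.

Lemma Vsum_ext N f g : (forall k, (k < N)%nat -> f k = g k) -> Vsum N f = Vsum N g.
Proof. intros. extensionality i. unfold Vsum. apply Csum_ext. intros; rewrite H; auto. Qed.
Lemma Vsum_scal_r N f v : Vsum N (fun k => Vscale (f k) v) = Vscale (Csum N f) v.
Proof. extensionality i. unfold Vsum, Vscale. apply Csum_scal_r. Qed.
Lemma Vsum_add N f g : Vsum N (fun k => Vadd (f k) (g k)) = Vadd (Vsum N f) (Vsum N g).
Proof. extensionality i. unfold Vsum, Vadd. apply Csum_add. Qed.

Lemma XX_ev N k b : (S k < N)%nat -> (b < 2^N)%nat ->
  Mapply (2^N) (XX N k) (delta b) =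
  Vscale (if Bool.eqb (Nat.testbit b k) (Nat.testbit b (S k)) then C0 else RtoC 2)
         (delta (flip (flip b (S k)) k)).
Proof. intros. unfold XX. rewrite Mapply_add, !Mapply_mul.
  rewrite sx_ev, sx_ev, sy_ev, Mapply_vscale, sy_ev; try lia; try apply flip_lt; try lia; auto.
  rewrite testbit_flip. replace (Nat.eqb (S k) k) with false by (symmetry; apply Nat.eqb_neq; lia).
  extensionality a. unfold Vadd, Vscale, cy.
  destruct (Nat.testbit b k), (Nat.testbit b (S k)); simpl; Cring. Qed.

Definition om N := Nat.ones N.
Definition phi N j := Nat.clearbit (Nat.ones N) j.
Lemma om_lt N : (om N < 2^N)%nat.
Proof. apply lt_pow2_bits. intros. apply Nat.ones_spec_high; auto. Qed.
Lemma testbit_om N k : Nat.testbit (om N) k = Nat.ltb k N.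
Proof. unfold om. destruct (Nat.ltb_spec k N). apply Nat.ones_spec_low; auto. apply Nat.ones_spec_high; auto. Qed.
Lemma testbit_phi N j k : Nat.testbit (phi N j) k = (Nat.ltb k N && negb (Nat.eqb j k))%bool.
Proof. unfold phi. rewrite Nat.clearbit_eqb. fold (om N). rewrite testbit_om. auto. Qed.
Lemma phi_lt N j : (phi N j < 2^N)%nat.
Proof. apply lt_pow2_bits. intros. rewrite testbit_phi. destruct (Nat.ltb_spec m N); auto; lia. Qed.

Definition Esum N (w : nat -> R) : C := Csum N (fun k => RtoC (w k)).

Lemma H_om N w : Mapply (2^N) (Hab N w) (delta (om N)) = Vscale (Esum N w) (delta (om N)).
Proof. unfold Hab. rewrite Mapply_opp, Mapply_add, !Mapply_msum.
  rewrite (Vsum_ext _ _ (fun k => Vscale C0 (delta (om N)))).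
  rewrite (Vsum_ext N _ (fun k => Vscale (Cmul (RtoC (w k)) (Copp C1)) (delta (om N)))).
  rewrite !Vsum_scal_r. rewrite Csum_zero. extensionality a. unfold Vscale, Vadd, Esum.
  rewrite Csum_scal_r. Cring.
  - intros. rewrite Mapply_scale, sz_ev, testbit_om; auto. apply Nat.ltb_lt in H. rewrite H.
    extensionality a. unfold Vscale, cz. Cring. apply om_lt.
  - intros. rewrite XX_ev; try lia. rewrite !testbit_om.
    replace (Nat.ltb k N) with true by (symmetry; apply Nat.ltb_lt; lia).
    replace (Nat.ltb (S k) N) with true by (symmetry; apply Nat.ltb_lt; lia). simpl.
    extensionality a. unfold Vscale. Cring. apply om_lt. Qed.


Definition Heffab (N : nat) (w : nat -> R) : Mat := fun p q =>
  if (Nat.ltb p N && Nat.ltb q N)%bool then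
    (if Nat.eqb p q then RtoC (w p)
     else if (Nat.eqb p (S q) || Nat.eqb q (S p))%bool then C1 else C0)
  else C0.
Lemma Heff_eq m n nu : Heff m n nu = Heffab (nsites m n) (fun p => nu (m + Z.of_nat p)%Z).
Proof. reflexivity. Qed.

Definition Kmat N w : Mat := fun q j =>
  Cadd (if Nat.eqb q j then Esum N w else C0) (Cmul (RtoC (-2)) (Heffab N w q j)).

Lemma Csum_opp N f : Csum N (fun k => Copp (f k)) = Copp (Csum N f).
Proof. induction N; simpl. Cring. rewrite IHN. Cring. Qed.

Ltac bitcrunch := apply bits_eq; let x := fresh "x" in intro x;
  repeat (rewrite ?testbit_flip, ?testbit_phi);
  repeat match goal with |- context [Nat.eqb ?a ?b] => destruct (Nat.eqb_spec a b)
           | |- context [Nat.ltb ?a ?b] => destruct (Nat.ltb_spec a b) end; simpl; try lia; auto.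

Lemma H_phi N w j : (j < N)%nat ->
  Mapply (2^N) (Hab N w) (delta (phi N j)) = Vsum N (fun q => Vscale (Kmat N w q j) (delta (phi N q))).
Proof. intros Hj. unfold Hab. rewrite Mapply_opp, Mapply_add, !Mapply_msum.
  rewrite (Vsum_ext (N-1) _ (fun k => Vadd (Vscale (if Nat.eqb k j then RtoC 2 else C0) (delta (phi N (S j))))
          (Vscale (if Nat.eqb (S k) j then RtoC 2 else C0) (delta (phi N (pred j)))))).
  2:{ intros k Hk. rewrite XX_ev; try lia. 2: apply phi_lt. rewrite !testbit_phi.
      replace (Nat.ltb k N) with true by (symmetry; apply Nat.ltb_lt; lia).
      replace (Nat.ltb (S k) N) with true by (symmetry; apply Nat.ltb_lt; lia).
      destruct (Nat.eqb_spec j k).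
      - subst. rewrite Nat.eqb_refl. replace (Nat.eqb k (S k)) with false by (symmetry; apply Nat.eqb_neq; lia).
        replace (Nat.eqb (S k) k) with false by (symmetry; apply Nat.eqb_neq; lia). simpl.
        replace (flip (flip (phi N k) (S k)) k) with (phi N (S k)) by bitcrunch.
        extensionality a. unfold Vscale, Vadd. Cring.
      - destruct (Nat.eqb_spec j (S k)).
        + subst. replace (Nat.eqb k (S k)) with false by (symmetry; apply Nat.eqb_neq; lia).
          rewrite Nat.eqb_refl. simpl.
          replace (flip (flip (phi N (S k)) (S k)) k) with (phi N k) by bitcrunch.
          extensionality a. unfold Vscale, Vadd. Cring.
        + replace (Nat.eqb k j) with false by (symmetry; apply Nat.eqb_neq; lia).
          replace (Nat.eqb (S k) j) with false by (symmetry; apply Nat.eqb_neq; lia). simpl.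
          extensionality a. unfold Vscale, Vadd. Cring. }
  rewrite (Vsum_ext N _ (fun k => Vscale (Cadd (if Nat.eqb k j then RtoC (2 * w k) else C0) (Copp (RtoC (w k)))) (delta (phi N j)))).
  2:{ intros k Hk. rewrite Mapply_scale, sz_ev, testbit_phi; auto. 2: apply phi_lt.
      replace (Nat.ltb k N) with true by (symmetry; apply Nat.ltb_lt; lia). simpl.
      extensionality a. unfold Vscale, cz. destruct (Nat.eqb_spec j k); destruct (Nat.eqb_spec k j); try lia; simpl; Cring. }
  rewrite (Vsum_ext N (fun q => Vscale (Kmat N w q j) (delta (phi N q)))
     (fun q => Vadd (Vscale (if Nat.eqb q j then Cadd (Esum N w) (RtoC (-2 * w j)) else C0) (delta (phi N j)))
        (Vadd (Vscale (if Nat.eqb q (S j) then RtoC (-2) else C0) (delta (phi N (S j))))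
              (Vscale (if Nat.eqb (S q) j then RtoC (-2) else C0) (delta (phi N (pred j))))))).
  2:{ intros q Hq. unfold Kmat, Heffab.
      replace (Nat.ltb q N) with true by (symmetry; apply Nat.ltb_lt; lia).
      replace (Nat.ltb j N) with true by (symmetry; apply Nat.ltb_lt; lia).
      extensionality a. unfold Vscale, Vadd.
      repeat match goal with |- context [Nat.eqb ?a ?b] => destruct (Nat.eqb_spec a b) end;
      try lia; subst; simpl; Cring. }
  rewrite !Vsum_add, !Vsum_scal_r, !Csum_add, Csum_opp, !Csum_delta.
  fold (Esum N w).
  replace (Nat.ltb j (N - 1)) with (Nat.ltb (S j) N) by (destruct (Nat.ltb_spec (S j) N); destruct (Nat.ltb_spec j (N-1)); auto; lia).
  replace (Nat.ltb j N) with true by (symmetry; apply Nat.ltb_lt; lia).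
  destruct j as [|j'].
  - rewrite !(Csum_ext _ (fun k => if Nat.eqb (S k) 0 then _ else C0) (fun _ => C0)) by (intros; simpl; auto).
    rewrite !Csum_zero. extensionality a. unfold Vscale, Vadd. destruct (Nat.ltb 1 N); Cring.
  - rewrite (Csum_ext (N-1) (fun k => if Nat.eqb (S k) (S j') then RtoC 2 else C0) (fun k => if Nat.eqb k j' then RtoC 2 else C0)) by (intros; simpl; auto).
    rewrite (Csum_ext N (fun k => if Nat.eqb (S k) (S j') then RtoC (-2) else C0) (fun k => if Nat.eqb k j' then RtoC (-2) else C0)) by (intros; simpl; auto).
    rewrite !Csum_delta.
    replace (Nat.ltb j' (N-1)) with true by (symmetry; apply Nat.ltb_lt; lia).
    replace (Nat.ltb j' N) with true by (symmetry; apply Nat.ltb_lt; lia).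
    extensionality a. unfold Vscale, Vadd. destruct (Nat.ltb (S (S j')) N); Cring. Qed.


Fixpoint zs (b k : nat) : C := match k with O => C1 | S k' => Cmul (zs b k') (cz (Nat.testbit b k')) end.

Lemma Mid_ev d b : (b < d)%nat -> Mapply d Mid (delta b) = delta b.
Proof. intros. rewrite Mapply_delta; auto. Qed.

Lemma zstring_ev m n k b : (k <= nsites m n)%nat -> (b < 2 ^ nsites m n)%nat ->
  Mapply (hdim m n) (zstring m n k) (delta b) = Vscale (zs b k) (delta b).
Proof. intros Hk Hb. induction k; simpl.
  - rewrite Mid_ev; auto. extensionality a; unfold Vscale; Cring.
  - rewrite Mapply_mul. unfold sigz. rewrite loc_add. unfold hdim in *. rewrite sz_ev; auto; try lia.
    rewrite Mapply_vscale, IHk; try lia. extensionality a; unfold Vscale; Cring. Qed.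

Lemma adag_om m n r : (loc m r < nsites m n)%nat ->
  Mapply (hdim m n) (adag m n r) (delta (om (nsites m n))) = delta (phi (nsites m n) (loc m r)).
Proof. intros. unfold adag, sigx, sigy, hdim. rewrite Mapply_scale, Mapply_add, Mapply_scale.
  rewrite sx_ev, sy_ev; auto; try apply om_lt. rewrite testbit_om. apply Nat.ltb_lt in H. rewrite H.
  replace (flip (om (nsites m n)) (loc m r)) with (phi (nsites m n) (loc m r)).
  extensionality a; unfold Vscale, Vadd, cy; Cring.
  apply bits_eq; intro x. rewrite testbit_flip, !testbit_phi, !testbit_om.
  destruct (Nat.eqb_spec (loc m r) x); subst; simpl. rewrite H. auto. apply andb_true_r. Qed.

Lemma aop_ev m n l b : (loc m l < nsites m n)%nat -> (b < 2 ^ nsites m n)%nat ->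
  Mapply (hdim m n) (aop m n l) (delta b) =
  Vscale (if Nat.testbit b (loc m l) then C0 else C1) (delta (flip b (loc m l))).
Proof. intros. unfold aop, sigx, sigy, hdim, Msub. rewrite Mapply_scale, Mapply_add, Mapply_opp, Mapply_scale.
  rewrite sx_ev, sy_ev; auto. extensionality a; unfold Vscale, Vadd, cy.
  destruct (Nat.testbit b (loc m l)); Cring. Qed.

Lemma cJW_ev m n l b : (loc m l < nsites m n)%nat -> (b < 2 ^ nsites m n)%nat ->
  Mapply (hdim m n) (cJW m n l) (delta b) =
  Vscale (if Nat.testbit b (loc m l) then C0 else zs (flip b (loc m l)) (loc m l)) (delta (flip b (loc m l))).
Proof. intros. unfold cJW. rewrite Mapply_mul, aop_ev, Mapply_vscale, zstring_ev; auto; try lia.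
  extensionality a; unfold Vscale. destruct (Nat.testbit b (loc m l)); Cring. apply flip_lt; auto. Qed.

Lemma cJW_om m n l : (loc m l < nsites m n)%nat ->
  Mapply (hdim m n) (cJW m n l) (delta (om (nsites m n))) = Vzero.
Proof. intros. rewrite cJW_ev; auto. 2: apply om_lt. rewrite testbit_om. apply Nat.ltb_lt in H. rewrite H.
  extensionality a; unfold Vscale, Vzero; Cring. Qed.

Lemma cJW_phi m n l q : (loc m l < nsites m n)%nat -> (q < nsites m n)%nat ->
  Mapply (hdim m n) (cJW m n l) (delta (phi (nsites m n) q)) =
  Vscale (if Nat.eqb q (loc m l) then zs (om (nsites m n)) (loc m l) else C0) (delta (om (nsites m n))).
Proof. intros. rewrite cJW_ev; auto. 2: apply phi_lt. rewrite testbit_phi. apply Nat.ltb_lt in H as H'. rewrite H'.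
  destruct (Nat.eqb_spec q (loc m l)).
  - subst. try rewrite Nat.eqb_refl. simpl.
    replace (flip (phi (nsites m n) (loc m l)) (loc m l)) with (om (nsites m n)). auto.
    apply bits_eq; intro x. rewrite testbit_flip, !testbit_phi, !testbit_om.
    repeat match goal with |- context [Nat.eqb ?a ?b] => destruct (Nat.eqb_spec a b) end; subst; try lia;
    try rewrite H'; simpl; auto; try apply andb_true_r. all: rewrite ?andb_true_r; auto.
  - try replace (Nat.eqb q (loc m l)) with false by (symmetry; apply Nat.eqb_neq; auto). simpl.
    extensionality a; unfold Vscale; Cring. Qed.

Lemma zs_om_mod N k : (k <= N)%nat -> Cre (zs (om N) k) ^ 2 + Cim (zs (om N) k) ^ 2 = 1.
Proof. induction k; intros; simpl. ring. rewrite testbit_om.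
  replace (Nat.ltb k N) with true by (symmetry; apply Nat.ltb_lt; lia). simpl.
  specialize (IHk ltac:(lia)). simpl in IHk. nra. Qed.


Definition N1 (x : C) : R := Rabs (Cre x) + Rabs (Cim x).
Lemma N1_ge0 x : 0 <= N1 x.
Proof. unfold N1. pose proof (Rabs_pos (Cre x)); pose proof (Rabs_pos (Cim x)); lra. Qed.
Lemma N1_add x y : N1 (Cadd x y) <= N1 x + N1 y.
Proof. unfold N1; simpl. pose proof (Rabs_triang (Cre x) (Cre y)); pose proof (Rabs_triang (Cim x) (Cim y)); lra. Qed.
Lemma N1_mul x y : N1 (Cmul x y) <= N1 x * N1 y.
Proof. unfold N1; simpl.
  assert (Rabs (Cre x * Cre y - Cim x * Cim y) <= Rabs (Cre x) * Rabs (Cre y) + Rabs (Cim x) * Rabs (Cim y)).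
  { unfold Rminus. eapply Rle_trans. apply Rabs_triang. rewrite Rabs_Ropp, !Rabs_mult. lra. }
  assert (Rabs (Cre x * Cim y + Cim x * Cre y) <= Rabs (Cre x) * Rabs (Cim y) + Rabs (Cim x) * Rabs (Cre y)).
  { eapply Rle_trans. apply Rabs_triang. rewrite !Rabs_mult. lra. }
  nra. Qed.
Lemma N1_Csum N f : N1 (Csum N f) <= Rsumn N (fun i => N1 (f i)).
Proof. induction N; simpl. unfold N1; simpl; rewrite Rabs_R0; lra.
  eapply Rle_trans. apply N1_add. lra. Qed.
Lemma Re_le_N1 x : Rabs (Cre x) <= N1 x.
Proof. unfold N1; pose proof (Rabs_pos (Cim x)); lra. Qed.
Lemma Im_le_N1 x : Rabs (Cim x) <= N1 x.
Proof. unfold N1; pose proof (Rabs_pos (Cre x)); lra. Qed.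
Lemma N1_RtoC r : N1 (RtoC r) = Rabs r.
Proof. unfold N1; simpl; rewrite Rabs_R0; ring. Qed.

Definition Ccv (u : nat -> C) (z : C) := Un_cv (fun n => Cre (u n)) (Cre z) /\ Un_cv (fun n => Cim (u n)) (Cim z).

Lemma Rlim_eq u l : Un_cv u l -> Rlim u = l.
Proof. intros. unfold Rlim. apply UL_sequence with u; auto. apply epsilon_spec. exists l; auto. Qed.
Lemma Clim_eq u z : Ccv u z -> Clim u = z.
Proof. intros [H1 H2]. unfold Clim. rewrite (Rlim_eq _ _ H1), (Rlim_eq _ _ H2). destruct z; auto. Qed.

Lemma Un_cv_ext u v l : (forall n, u n = v n) -> Un_cv u l -> Un_cv v l.
Proof. intros E H eps He. destruct (H eps He) as [N HN]. exists N; intros. rewrite <- E; auto. Qed.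
Lemma Ccv_ext u v z : (forall n, u n = v n) -> Ccv u z -> Ccv v z.
Proof. intros E [H1 H2]; split; eapply Un_cv_ext; eauto; intros; simpl; rewrite E; auto. Qed.
Lemma Ccv_add u v a b : Ccv u a -> Ccv v b -> Ccv (fun n => Cadd (u n) (v n)) (Cadd a b).
Proof. intros [? ?] [? ?]; split; simpl; apply CV_plus; auto. Qed.
Lemma Ccv_mul u v a b : Ccv u a -> Ccv v b -> Ccv (fun n => Cmul (u n) (v n)) (Cmul a b).
Proof. intros [? ?] [? ?]; split; simpl. apply CV_minus; apply CV_mult; auto. apply CV_plus; apply CV_mult; auto. Qed.
Lemma Un_cv_const c : Un_cv (fun _ => c) c.
Proof. intros eps He. exists 0%nat. intros. unfold Rdist. rewrite Rminus_diag, Rabs_R0; lra. Qed.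
Lemma Ccv_const c : Ccv (fun _ => c) c.
Proof. split; apply Un_cv_const. Qed.
Lemma Ccv_Csum M (u : nat -> nat -> C) (z : nat -> C) :
  (forall q, (q < M)%nat -> Ccv (fun n => u n q) (z q)) -> Ccv (fun n => Csum M (u n)) (Csum M z).
Proof. induction M; intros; simpl. apply Ccv_const. apply Ccv_add; auto. Qed.

Lemma Un_cv_squeeze0 u v : (forall n, Rabs (u n) <= v n) -> Un_cv v 0 -> Un_cv u 0.
Proof. intros H Hv eps He. destruct (Hv eps He) as [N HN]. exists N; intros.
  specialize (HN n H0). specialize (H n). unfold Rdist in *. rewrite Rminus_0_r in *.
  pose proof (Rle_abs (v n)). lra. Qed.

Lemma Un_cv_shift u l : Un_cv (fun n => u (S n)) l -> Un_cv u l.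
Proof. intros H eps He. destruct (H eps He) as [N HN]. exists (S N). intros.
  destruct n. lia. apply HN. lia. Qed.

Lemma Rsumn_sum f N : Rsumn (S N) f = sum_f_R0 f N.
Proof. induction N; simpl. ring. simpl in IHN. rewrite <- IHN. ring. Qed.

Lemma exp_cv x : Un_cv (fun N => Rsumn N (fun k => / INR (fact k) * x ^ k)) (exp x).
Proof. apply Un_cv_shift. unfold exp. destruct (exist_exp x) as [l Hl]. cbn [proj1_sig].
  intros eps He. destruct (Hl eps He) as [N HN]. exists N; intros. rewrite Rsumn_sum. apply HN; auto. Qed.

Lemma series_comp (a b : nat -> R) : (forall k, Rabs (a k) <= b k) ->
  (exists l, Un_cv (fun N => Rsumn N b) l) -> exists l, Un_cv (fun N => Rsumn N a) l.
Proof. intros Hab [lb Hb].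
  assert (Hb' : {l | Un_cv (fun N => sum_f_R0 b N) l}).
  { exists lb. intros eps He. destruct (Hb eps He) as [N HN]. exists N; intros. rewrite <- Rsumn_sum. apply HN; lia. }
  destruct (Rseries_CV_comp (fun k => (Rabs (a k) + a k) / 2) b) as [l1 H1]; auto.
  { intros. specialize (Hab n). pose proof (Rle_abs (a n)). pose proof (Rabs_pos (a n)).
    assert (- a n <= Rabs (a n)) by (rewrite <- Rabs_Ropp; apply Rle_abs). split; lra. }
  destruct (Rseries_CV_comp (fun k => (Rabs (a k) - a k) / 2) b) as [l2 H2]; auto.
  { intros. specialize (Hab n). pose proof (Rle_abs (a n)).
    assert (- a n <= Rabs (a n)) by (rewrite <- Rabs_Ropp; apply Rle_abs). split; lra. }
  exists (l1 - l2). apply Un_cv_shift.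
  apply Un_cv_ext with (fun N => sum_f_R0 (fun k => (Rabs (a k) + a k) / 2) N - sum_f_R0 (fun k => (Rabs (a k) - a k) / 2) N).
  intros. rewrite <- !Rsumn_sum. rewrite (Rsumn_ext (S n) a (fun k => (Rabs (a k) + a k) / 2 + (-1) * ((Rabs (a k) - a k) / 2))).
  rewrite Rsumn_add, Rsumn_scal. ring. intros; field.
  apply CV_minus; auto. Qed.

Lemma Ccomp (u : nat -> C) (b : nat -> R) : (forall k, N1 (u k) <= b k) ->
  (exists l, Un_cv (fun N => Rsumn N b) l) -> Ccv (fun N => Csum N u) (Clim (fun N => Csum N u)).
Proof. intros Hb Hl.
  destruct (series_comp (fun k => Cre (u k)) b) as [l1 H1]; auto.
  { intros; eapply Rle_trans. apply Re_le_N1. auto. }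
  destruct (series_comp (fun k => Cim (u k)) b) as [l2 H2]; auto.
  { intros; eapply Rle_trans. apply Im_le_N1. auto. }
  assert (Ccv (fun N => Csum N u) (mkC l1 l2)).
  { split; simpl; eapply Un_cv_ext; eauto; intros; simpl; [rewrite Cre_Csum|rewrite Cim_Csum]; auto. }
  rewrite (Clim_eq _ _ H). auto. Qed.

Definition Mnorm (d : nat) (K : Mat) : R := Rsumn d (fun p => Rsumn d (fun q => N1 (K p q))).

Lemma col_le_Mnorm d K j : (j < d)%nat -> Rsumn d (fun p => N1 (K p j)) <= Mnorm d K.
Proof. intros. unfold Mnorm. rewrite Rsumn_swap. apply Rsumn_term_le with (f := fun q => Rsumn d (fun p => N1 (K p q))); auto.
  intros; apply Rsumn_nonneg; intros; apply N1_ge0. Qed.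
Lemma Mnorm_ge0 d K : 0 <= Mnorm d K.
Proof. apply Rsumn_nonneg; intros; apply Rsumn_nonneg; intros; apply N1_ge0. Qed.

Lemma Mpow_bound d K k i j : (j < d)%nat -> N1 (Mpow d K k i j) <= Mnorm d K ^ k.
Proof. revert i j. induction k; intros; simpl.
  - unfold Mid. destruct (Nat.eqb i j); unfold N1; simpl; rewrite ?Rabs_R0, ?Rabs_R1; lra.
  - unfold Mmul. eapply Rle_trans. apply N1_Csum.
    apply Rle_trans with (Rsumn d (fun p => Mnorm d K ^ k * N1 (K p j))).
    apply Rsumn_le; intros. eapply Rle_trans. apply N1_mul. apply Rmult_le_compat_r. apply N1_ge0. auto.
    rewrite Rsumn_scal. rewrite (Rmult_comm (Mnorm d K ^ k)). apply Rmult_le_compat_r.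
    apply pow_le, Mnorm_ge0. apply col_le_Mnorm; auto. Qed.

Definition eterm (d : nat) (K : Mat) i j k : C := Cmul (RtoC (/ INR (fact k))) (Mpow d K k i j).

Lemma inv_fact_pos k : 0 < / INR (fact k).
Proof. apply Rinv_0_lt_compat. apply lt_0_INR. apply lt_O_fact. Qed.

Lemma eterm_bound d K i j k : (j < d)%nat -> N1 (eterm d K i j k) <= / INR (fact k) * Mnorm d K ^ k.
Proof. intros. unfold eterm. eapply Rle_trans. apply N1_mul. rewrite N1_RtoC.
  rewrite Rabs_right. 2: left; apply inv_fact_pos. apply Rmult_le_compat_l. left; apply inv_fact_pos.
  apply Mpow_bound; auto. Qed.

Lemma exp_cv_mat d K i j : (j < d)%nat -> Ccv (fun N => Csum N (eterm d K i j)) (Mexp d K i j).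
Proof. intros. unfold Mexp. fold (eterm d K i j). apply Ccomp with (fun k => / INR (fact k) * Mnorm d K ^ k).
  intros; apply eterm_bound; auto. exists (exp (Mnorm d K)). apply exp_cv. Qed.



Lemma intertw_pow (D L : nat) (A K : Mat) (phi : nat -> nat)
  (Hphi : forall q, (q < L)%nat -> (phi q < D)%nat)
  (HAK : forall j, (j < L)%nat -> Mapply D A (delta (phi j)) = Vsum L (fun q => Vscale (K q j) (delta (phi q)))) k j : (j < L)%nat ->
  Mapply D (Mpow D A k) (delta (phi j)) = Vsum L (fun q => Vscale (Mpow L K k q j) (delta (phi q))).
Proof. revert j. induction k; intros j Hj.
  - simpl. rewrite Mapply_delta; auto. extensionality a. unfold Vsum, Vscale.
    transitivity (Csum L (fun q => if Nat.eqb q j then delta (phi q) a else C0)).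
    rewrite Csum_delta. apply Nat.ltb_lt in Hj. rewrite Hj. reflexivity.
    apply Csum_ext; intros q _. unfold Mid. destruct (Nat.eqb q j); Cring.
  - simpl. rewrite Mapply_mul, HAK, Mapply_vsum; auto.
    rewrite (Vsum_ext _ _ (fun q => Vscale (K q j) (Vsum L (fun p => Vscale (Mpow L K k p q) (delta (phi p)))))).
    2:{ intros. rewrite Mapply_vscale, IHk; auto. }
    extensionality a. unfold Vsum, Vscale, Mmul.
    transitivity (Csum L (fun q => Csum L (fun p => Cmul (Cmul (Mpow L K k p q) (K q j)) (delta (phi p) a)))).
    apply Csum_ext; intros. rewrite <- Csum_scal. apply Csum_ext; intros. Cring.
    rewrite Csum_swap. apply Csum_ext; intros. rewrite <- Csum_scal_r. auto. Qed.

Lemma intertw_exp (D L : nat) (A K : Mat) (phi : nat -> nat)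
  (Hphi : forall q, (q < L)%nat -> (phi q < D)%nat)
  (HAK : forall j, (j < L)%nat -> Mapply D A (delta (phi j)) = Vsum L (fun q => Vscale (K q j) (delta (phi q)))) j : (j < L)%nat ->
  Mapply D (Mexp D A) (delta (phi j)) = Vsum L (fun q => Vscale (Mexp L K q j) (delta (phi q))).
Proof. intros Hj. rewrite Mapply_delta; auto. extensionality a. unfold Vsum, Vscale.
  unfold Mexp at 1. apply Clim_eq.
  apply Ccv_ext with (fun N => Csum L (fun q => Cmul (Csum N (eterm L K q j)) (delta (phi q) a))).
  - intros N. unfold eterm.
    transitivity (Csum N (fun k => Csum L (fun q => Cmul (Cmul (RtoC (/ INR (fact k))) (Mpow L K k q j)) (delta (phi q) a)))).
    rewrite Csum_swap. apply Csum_ext; intros. rewrite Csum_scal_r. auto.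
    apply Csum_ext; intros k _. pose proof (intertw_pow D L A K phi Hphi HAK k j Hj) as E. apply (f_equal (fun v => v a)) in E.
    rewrite Mapply_delta in E; auto. rewrite E. unfold Vsum, Vscale. rewrite <- Csum_scal.
    apply Csum_ext; intros; Cring.
  - apply Ccv_Csum. intros. apply Ccv_mul. apply exp_cv_mat; auto. apply Ccv_const. Qed.


Lemma tri_C N (f : nat -> nat -> C) :
  Csum N (fun k => Csum (S k) (fun p => f p (k - p)%nat)) = Csum N (fun p => Csum (N - p) (fun m => f p m)).
Proof. induction N. reflexivity.
  change (Csum (S N) (fun k => Csum (S k) (fun p => f p (k - p)%nat))) with
    (Cadd (Csum N (fun k => Csum (S k) (fun p => f p (k - p)%nat))) (Csum (S N) (fun p => f p (N - p)%nat))).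
  rewrite IHN.
  rewrite (Csum_ext (S N) (fun p => Csum (S N - p) (fun m => f p m)) (fun p => Cadd (Csum (N - p) (fun m => f p m)) (f p (N - p)%nat))).
  2:{ intros. replace (S N - i)%nat with (S (N - i)) by lia. reflexivity. }
  rewrite Csum_add. f_equal. simpl. replace (N - N)%nat with 0%nat by lia. simpl. Cring. Qed.

Lemma tri_R N (f : nat -> nat -> R) :
  Rsumn N (fun k => Rsumn (S k) (fun p => f p (k - p)%nat)) = Rsumn N (fun p => Rsumn (N - p) (fun m => f p m)).
Proof. induction N. reflexivity.
  change (Rsumn (S N) (fun k => Rsumn (S k) (fun p => f p (k - p)%nat))) with
    (Rsumn N (fun k => Rsumn (S k) (fun p => f p (k - p)%nat)) + Rsumn (S N) (fun p => f p (N - p)%nat)).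
  rewrite IHN.
  rewrite (Rsumn_ext (S N) (fun p => Rsumn (S N - p) (fun m => f p m)) (fun p => Rsumn (N - p) (fun m => f p m) + f p (N - p)%nat)).
  2:{ intros. replace (S N - i)%nat with (S (N - i)) by lia. reflexivity. }
  rewrite Rsumn_add. simpl. replace (N - N)%nat with 0%nat by lia. simpl. ring. Qed.

Lemma tail_bound (b : nat -> C) (beta : nat -> R) M' M : (forall m, N1 (b m) <= beta m) -> (M' <= M)%nat ->
  N1 (Csub (Csum M b) (Csum M' b)) <= Rsumn M beta - Rsumn M' beta.
Proof. intros Hb H. induction H.
  - replace (Csub (Csum M' b) (Csum M' b)) with C0 by Cring. unfold N1; simpl; rewrite Rabs_R0; lra.
  - replace (Csub (Csum (S m) b) (Csum M' b)) with (Cadd (Csub (Csum m b) (Csum M' b)) (b m)) by (simpl; Cring).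
    eapply Rle_trans. apply N1_add. simpl. specialize (Hb m). lra. Qed.

Lemma Rsumn_sub N f g : Rsumn N (fun i => f i - g i) = Rsumn N f - Rsumn N g.
Proof. induction N; simpl. ring. rewrite IHN. ring. Qed.
Lemma Csum_mul N M (a b : nat -> C) : Cmul (Csum N a) (Csum M b) = Csum N (fun p => Csum M (fun m => Cmul (a p) (b m))).
Proof. rewrite <- Csum_scal_r. apply Csum_ext; intros. rewrite Csum_scal. auto. Qed.
Lemma Rsumn_mul N M (a b : nat -> R) : Rsumn N a * Rsumn M b = Rsumn N (fun p => Rsumn M (fun m => a p * b m)).
Proof. induction N; simpl. ring. rewrite <- IHN. rewrite Rsumn_scal. ring. Qed.

Lemma cauchy (a b : nat -> C) (al be : nat -> R) la lb sa sb :
  (forall p, N1 (a p) <= al p) -> (forall m, N1 (b m) <= be m) ->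
  Ccv (fun N => Csum N a) la -> Ccv (fun N => Csum N b) lb ->
  Un_cv (fun N => Rsumn N al) sa -> Un_cv (fun N => Rsumn N be) sb ->
  Un_cv (fun N => Rsumn N (fun k => Rsumn (S k) (fun p => al p * be (k - p)%nat))) (sa * sb) ->
  Ccv (fun N => Csum N (fun k => Csum (S k) (fun p => Cmul (a p) (b (k - p)%nat)))) (Cmul la lb).
Proof. intros Ha Hb Hla Hlb Hsa Hsb Hs.
  set (R_ N := Csub (Cmul (Csum N a) (Csum N b)) (Csum N (fun k => Csum (S k) (fun p => Cmul (a p) (b (k - p)%nat))))).
  set (rho N := Rsumn N al * Rsumn N be - Rsumn N (fun k => Rsumn (S k) (fun p => al p * be (k - p)%nat))).
  assert (Hrho : Un_cv rho 0).
  { replace 0 with (sa * sb - sa * sb) by ring. apply CV_minus; auto. apply CV_mult; auto. }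
  assert (HR : forall N, N1 (R_ N) <= rho N).
  { intros N. unfold R_, rho. rewrite (tri_C N (fun p m => Cmul (a p) (b m))), (tri_R N (fun p m => al p * be m)), Csum_mul, Rsumn_mul.
    replace (Csub (Csum N (fun p => Csum N (fun m => Cmul (a p) (b m)))) (Csum N (fun p => Csum (N - p) (fun m => Cmul (a p) (b m)))))
      with (Csum N (fun p => Cmul (a p) (Csub (Csum N b) (Csum (N - p) b)))).
    2:{ unfold Csub. rewrite <- Csum_opp, <- Csum_add. apply Csum_ext; intros.
        rewrite !Csum_scal. Cring. }
    eapply Rle_trans. apply N1_Csum.
    replace (Rsumn N (fun p => Rsumn N (fun m => al p * be m)) - Rsumn N (fun p => Rsumn (N - p) (fun m => al p * be m)))
      with (Rsumn N (fun p => al p * (Rsumn N be - Rsumn (N - p) be))).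
    2:{ rewrite <- Rsumn_sub. apply Rsumn_ext; intros. rewrite !Rsumn_scal. ring. }
    apply Rsumn_le; intros. eapply Rle_trans. apply N1_mul. apply Rmult_le_compat.
    apply N1_ge0. apply N1_ge0. auto. apply tail_bound; auto; lia. }
  destruct Hla as [Ha1 Ha2]. destruct Hlb as [Hb1 Hb2].
  split.
  - apply Un_cv_ext with (fun N => Cre (Cmul (Csum N a) (Csum N b)) - Cre (R_ N)).
    intros; unfold R_; simpl; ring.
    replace (Cre (Cmul la lb)) with (Cre (Cmul la lb) - 0) by ring. apply CV_minus.
    simpl. apply CV_minus; apply CV_mult; auto.
    apply Un_cv_squeeze0 with rho; auto. intros; eapply Rle_trans. apply Re_le_N1. auto.
  - apply Un_cv_ext with (fun N => Cim (Cmul (Csum N a) (Csum N b)) - Cim (R_ N)).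
    intros; unfold R_; simpl; ring.
    replace (Cim (Cmul la lb)) with (Cim (Cmul la lb) - 0) by ring. apply CV_minus.
    simpl. apply CV_plus; apply CV_mult; auto.
    apply Un_cv_squeeze0 with rho; auto. intros; eapply Rle_trans. apply Im_le_N1. auto. Qed.


Fixpoint Cpow (c : C) (k : nat) : C := match k with O => C1 | S k' => Cmul (Cpow c k') c end.
Definition cb (k p : nat) : R := if Nat.leb p k then Binomial.C k p else 0.

Lemma Binom_k0 k : Binomial.C k 0 = 1.
Proof. unfold Binomial.C. replace (k - 0)%nat with k by lia. simpl. field. apply INR_fact_neq_0. Qed.
Lemma Binom_kk k : Binomial.C k k = 1.
Proof. unfold Binomial.C. replace (k - k)%nat with 0%nat by lia. simpl. field. apply INR_fact_neq_0. Qed.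
Lemma cb_0 k : cb k 0 = 1.
Proof. unfold cb. simpl. apply Binom_k0. Qed.
Lemma cb_big k p : (k < p)%nat -> cb k p = 0.
Proof. intros. unfold cb. destruct (Nat.leb_spec p k); auto; lia. Qed.
Lemma cb_S k p : cb (S k) (S p) = cb k p + cb k (S p).
Proof. unfold cb. destruct (Nat.leb_spec (S p) (S k)); destruct (Nat.leb_spec p k); destruct (Nat.leb_spec (S p) k); try lia.
  all: first [ring | (rewrite pascal by lia; ring) | (replace p with k by lia; rewrite !Binom_kk; ring)]. Qed.

Definition Xs (c : C) (B : Mat) : Mat := Madd (Mscale c Mid) B.

Lemma binom L c B k i j : (j < L)%nat ->
  Mpow L (Xs c B) k i j = Csum (S k) (fun p => Cmul (RtoC (cb k p)) (Cmul (Cpow c p) (Mpow L B (k - p) i j))).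
Proof. revert i j. induction k; intros i j Hj.
  - simpl. rewrite cb_0. Cring.
  - set (G := fun p m => Cmul (Cpow c p) (Mpow L B m i j)).
    change (Mpow L (Xs c B) (S k) i j) with (Csum L (fun q => Cmul (Mpow L (Xs c B) k i q) (Xs c B q j))).
    rewrite (Csum_ext L _ (fun q => Cadd (Cmul c (Cmul (Mpow L (Xs c B) k i q) (Mid q j))) (Cmul (Mpow L (Xs c B) k i q) (B q j)))).
    2:{ intros. unfold Xs, Madd, Mscale. Cring. }
    rewrite Csum_add, Csum_scal.
    rewrite (Csum_ext L (fun q => Cmul (Mpow L (Xs c B) k i q) (Mid q j)) (fun q => if Nat.eqb q j then Mpow L (Xs c B) k i q else C0)).
    2:{ intros q _. unfold Mid. destruct (Nat.eqb q j); Cring. }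
    rewrite Csum_delta. replace (Nat.ltb j L) with true by (symmetry; apply Nat.ltb_lt; auto).
    cbv beta. rewrite IHk; auto.
    rewrite (Csum_ext L _ (fun q => Csum (S k) (fun p => Cmul (RtoC (cb k p)) (Cmul (Cpow c p) (Cmul (Mpow L B (k - p) i q) (B q j)))))).
    2:{ intros. rewrite IHk; auto. rewrite <- Csum_scal_r. apply Csum_ext; intros. Cring. }
    rewrite Csum_swap.
    rewrite (Csum_ext (S k) (fun p => Csum L (fun q => Cmul (RtoC (cb k p)) (Cmul (Cpow c p) (Cmul (Mpow L B (k - p) i q) (B q j)))))
       (fun p => Cmul (RtoC (cb k p)) (G p (S (k - p))))).
    2:{ intros. unfold G. rewrite !Csum_scal. reflexivity. }
    rewrite <- Csum_scal.
    rewrite (Csum_ext (S k) (fun p => Cmul c (Cmul (RtoC (cb k p)) (Cmul (Cpow c p) (Mpow L B (k - p) i j))))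
       (fun p => Cmul (RtoC (cb k p)) (G (S p) (k - p)%nat))).
    2:{ intros. unfold G. simpl. Cring. }
    rewrite (Csum_shift (S k) (fun p => Cmul (RtoC (cb (S k) p)) (Cmul (Cpow c p) (Mpow L B (S k - p) i j)))). cbv beta.
    rewrite (Csum_ext (S k) (fun p => Cmul (RtoC (cb (S k) (S p))) (Cmul (Cpow c (S p)) (Mpow L B (S k - S p) i j)))
       (fun p => Cadd (Cmul (RtoC (cb k p)) (G (S p) (k - p)%nat)) (Cmul (RtoC (cb k (S p))) (G (S p) (k - p)%nat)))).
    2:{ intros. rewrite cb_S. unfold G. simpl (S k - S i0)%nat. Cring. }
    rewrite Csum_add.
    rewrite (Csum_shift k (fun p => Cmul (RtoC (cb k p)) (G p (S (k - p))))).
    change (Csum (S k) (fun p => Cmul (RtoC (cb k (S p))) (G (S p) (k - p)%nat))) with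
      (Cadd (Csum k (fun p => Cmul (RtoC (cb k (S p))) (G (S p) (k - p)%nat))) (Cmul (RtoC (cb k (S k))) (G (S k) (k - k)%nat))).
    rewrite (cb_big k (S k)) by lia.
    rewrite (Csum_ext k (fun p => Cmul (RtoC (cb k (S p))) (G (S p) (S (k - S p))))
        (fun p => Cmul (RtoC (cb k (S p))) (G (S p) (k - p)%nat))).
    2:{ intros. replace (S (k - S i0)) with (k - i0)%nat by lia. auto. }
    rewrite cb_0, cb_0. replace (k - 0)%nat with k by lia. unfold G. simpl (S k - 0)%nat. simpl Cpow. Cring. Qed.

Lemma coef_id k p : (p <= k)%nat -> / INR (fact k) * Binomial.C k p = / INR (fact p) * / INR (fact (k - p)).
Proof. intros. unfold Binomial.C. field. split; [apply INR_fact_neq_0 | split; apply INR_fact_neq_0]. Qed.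

Lemma Npow c p : N1 (Cpow c p) <= N1 c ^ p.
Proof. induction p; simpl. unfold N1; simpl; rewrite Rabs_R0, Rabs_R1; lra.
  eapply Rle_trans. apply N1_mul. rewrite Rmult_comm. apply Rmult_le_compat_l. apply N1_ge0. auto. Qed.

Definition ex (c : C) : C := Mexp 1 (fun _ _ => c) 0%nat 0%nat.
Lemma Mpow1 c k : Mpow 1 (fun _ _ => c) k 0%nat 0%nat = Cpow c k.
Proof. induction k; simpl. reflexivity. unfold Mmul. simpl. rewrite IHk. Cring. Qed.
Lemma ex_cv c : Ccv (fun N => Csum N (fun k => Cmul (RtoC (/ INR (fact k))) (Cpow c k))) (ex c).
Proof. eapply Ccv_ext. 2: apply (exp_cv_mat 1 (fun _ _ => c) 0%nat 0%nat); lia.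
  intros. apply Csum_ext; intros. unfold eterm. rewrite Mpow1. auto. Qed.

Lemma exp_triple x y : Un_cv (fun N => Rsumn N (fun k => Rsumn (S k)
   (fun p => (/ INR (fact p) * x ^ p) * (/ INR (fact (k - p)) * y ^ (k - p))))) (exp x * exp y).
Proof. rewrite <- exp_plus. eapply Un_cv_ext. 2: apply exp_cv. intros N. apply Rsumn_ext. intros k _.
  rewrite binomial, <- Rsumn_sum, <- Rsumn_scal. apply Rsumn_ext. intros p Hp.
  replace (/ INR (fact k) * (Binomial.C k p * x ^ p * y ^ (k - p))) with ((/ INR (fact k) * Binomial.C k p) * x ^ p * y ^ (k - p)) by ring.
  rewrite coef_id by lia. ring. Qed.

Lemma shift L c B i j : (j < L)%nat -> Mexp L (Xs c B) i j = Cmul (ex c) (Mexp L B i j).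
Proof. intros Hj. unfold Mexp at 1. apply Clim_eq.
  apply Ccv_ext with (fun N => Csum N (fun k => Csum (S k) (fun p =>
     Cmul (Cmul (RtoC (/ INR (fact p))) (Cpow c p)) (eterm L B i j (k - p)%nat)))).
  - intros N. apply Csum_ext. intros k _. fold (eterm L (Xs c B) i j k). unfold eterm at 2. rewrite binom; auto.
    rewrite <- Csum_scal. apply Csum_ext. intros p Hp. unfold eterm.
    replace (Cmul (RtoC (/ INR (fact k))) (Cmul (RtoC (cb k p)) (Cmul (Cpow c p) (Mpow L B (k - p) i j))))
      with (Cmul (RtoC (/ INR (fact k) * cb k p)) (Cmul (Cpow c p) (Mpow L B (k - p) i j))) by Cring.
    unfold cb. replace (Nat.leb p k) with true by (symmetry; apply Nat.leb_le; lia).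
    rewrite coef_id by lia. Cring.
  - apply cauchy with (al := fun p => / INR (fact p) * N1 c ^ p) (be := fun m => / INR (fact m) * Mnorm L B ^ m)
      (sa := exp (N1 c)) (sb := exp (Mnorm L B)).
    + intros. eapply Rle_trans. apply N1_mul. rewrite N1_RtoC, Rabs_right. 2: left; apply inv_fact_pos.
      apply Rmult_le_compat_l. left; apply inv_fact_pos. apply Npow.
    + intros. apply eterm_bound; auto.
    + apply ex_cv.
    + apply exp_cv_mat; auto.
    + apply exp_cv.
    + apply exp_cv.
    + apply exp_triple. Qed.


Lemma Mpow1_gen A k : Mpow 1 A k 0%nat 0%nat = Cpow (A 0%nat 0%nat) k.
Proof. induction k; simpl. reflexivity. unfold Mmul. simpl. rewrite IHk. Cring. Qed.
Lemma Mexp1 A : Mexp 1 A 0%nat 0%nat = ex (A 0%nat 0%nat).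
Proof. unfold ex, Mexp. f_equal. extensionality N. apply Csum_ext; intros. rewrite Mpow1_gen, Mpow1. auto. Qed.

Lemma ex0 : ex C0 = C1.
Proof. unfold ex. apply Clim_eq. assert (E : forall N, Csum (S N) (fun k => Cmul (RtoC (/ INR (fact k))) (Mpow 1 (fun _ _ => C0) k 0%nat 0%nat)) = C1).
  { induction N. simpl. Cring. change (Csum (S (S N)) ?f) with (Cadd (Csum (S N) f) (f (S N))). rewrite IHN, Mpow1. simpl. Cring. }
  split; apply Un_cv_shift.
  apply Un_cv_ext with (fun _ => Cre C1). intros; cbv beta; rewrite E; reflexivity. apply Un_cv_const.
  apply Un_cv_ext with (fun _ => Cim C1). intros; cbv beta; rewrite E; reflexivity. apply Un_cv_const. Qed.

Lemma ex_inv c : Cmul (ex c) (ex (Copp c)) = C1.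
Proof. rewrite <- ex0. rewrite <- (Mexp1 (fun _ _ => Copp c)). rewrite <- shift by lia.
  rewrite Mexp1. f_equal. unfold Xs, Madd, Mscale, Mid. simpl. Cring. Qed.

Definition Mconj (A : Mat) : Mat := fun p q => Cconj (A p q).
Lemma Cconj_Csum N f : Cconj (Csum N f) = Csum N (fun i => Cconj (f i)).
Proof. induction N; simpl. Cring. rewrite <- IHN. Cring. Qed.
Lemma Mpow_conj d A k i j : Mpow d (Mconj A) k i j = Cconj (Mpow d A k i j).
Proof. revert i j; induction k; intros; simpl. unfold Mid; destruct (Nat.eqb i j); Cring.
  unfold Mmul. rewrite Cconj_Csum. apply Csum_ext; intros. rewrite IHk. unfold Mconj. Cring. Qed.
Lemma Mexp_conj d A i j : (j < d)%nat -> Mexp d (Mconj A) i j = Cconj (Mexp d A i j).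
Proof. intros.
  pose proof (exp_cv_mat d A i j H) as [H1 H2].
  unfold Mexp at 1. apply Clim_eq. split.
  - eapply Un_cv_ext. 2: exact H1. intros. rewrite !Cre_Csum. apply Rsumn_ext; intros.
    unfold eterm. rewrite Mpow_conj. simpl. ring.
  - simpl. apply Un_cv_ext with (fun n => - Cim (Csum n (eterm d A i j))).
    intros. rewrite !Cim_Csum.
    replace (- Rsumn n (fun i0 => Cim (eterm d A i j i0))) with (-1 * Rsumn n (fun i0 => Cim (eterm d A i j i0))) by ring.
    rewrite <- Rsumn_scal. apply Rsumn_ext; intros. unfold eterm. rewrite Mpow_conj. simpl. ring.
    apply CV_opp in H2. unfold opp_seq in H2. exact H2. Qed.

Lemma Mpow_S_l d A k i j : (i < d)%nat -> (j < d)%nat ->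
  Mpow d A (S k) i j = Csum d (fun p => Cmul (A i p) (Mpow d A k p j)).
Proof. revert i j. induction k; intros i j Hi Hj.
  - simpl. unfold Mmul, Mid.
    transitivity (A i j).
    + transitivity (Csum d (fun p => if Nat.eqb p i then A p j else C0)).
      apply Csum_ext; intros p _. repeat match goal with |- context [Nat.eqb ?a ?b] => destruct (Nat.eqb_spec a b) end; subst; try lia; Cring.
      rewrite Csum_delta. apply Nat.ltb_lt in Hi. rewrite Hi. auto.
    + symmetry. transitivity (Csum d (fun p => if Nat.eqb p j then A i p else C0)).
      apply Csum_ext; intros p _. repeat match goal with |- context [Nat.eqb ?a ?b] => destruct (Nat.eqb_spec a b) end; subst; try lia; Cring.
      rewrite Csum_delta. apply Nat.ltb_lt in Hj. rewrite Hj. auto.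
  - change (Mpow d A (S (S k)) i j) with (Csum d (fun p => Cmul (Mpow d A (S k) i p) (A p j))).
    rewrite (Csum_ext d (fun p => Cmul (Mpow d A (S k) i p) (A p j)) (fun p => Csum d (fun q => Cmul (A i q) (Cmul (Mpow d A k q p) (A p j))))).
    2:{ intros. rewrite IHk; auto. rewrite <- Csum_scal_r. apply Csum_ext; intros. Cring. }
    rewrite Csum_swap. apply Csum_ext; intros. rewrite Csum_scal. reflexivity. Qed.

Lemma Mpow_sym d A k i j : (forall p q, (p < d)%nat -> (q < d)%nat -> A p q = A q p) ->
  (i < d)%nat -> (j < d)%nat -> Mpow d A k i j = Mpow d A k j i.
Proof. intros HA. revert i j. induction k; intros i j Hi Hj.
  - simpl. unfold Mid. rewrite Nat.eqb_sym. auto.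
  - rewrite (Mpow_S_l d A k j i); auto. simpl. unfold Mmul. apply Csum_ext; intros.
    rewrite IHk, HA; auto. Cring. Qed.

Lemma Mexp_sym d A i j : (forall p q, (p < d)%nat -> (q < d)%nat -> A p q = A q p) ->
  (i < d)%nat -> (j < d)%nat -> Mexp d A i j = Mexp d A j i.
Proof. intros. unfold Mexp. f_equal. extensionality N. apply Csum_ext; intros. rewrite Mpow_sym; auto. Qed.


Lemma Cmod_ge0 x : 0 <= Cmod x.
Proof. apply sqrt_pos. Qed.
Lemma Cmod_sq x : Cmod x ^ 2 = Cre x ^ 2 + Cim x ^ 2.
Proof. unfold Cmod. rewrite <- Rsqr_pow2, Rsqr_sqrt; auto. nra. Qed.
Lemma Cmod_mul x y : Cmod (Cmul x y) = Cmod x * Cmod y.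
Proof. unfold Cmod. rewrite <- sqrt_mult by nra. f_equal. simpl. ring. Qed.
Lemma Cmod_conj x : Cmod (Cconj x) = Cmod x.
Proof. unfold Cmod. simpl. f_equal. ring. Qed.
Lemma Cmod_C1 : Cmod C1 = 1.
Proof. unfold Cmod. simpl. replace (1 * (1 * 1) + 0 * (0 * 1)) with 1 by ring. apply sqrt_1. Qed.
Lemma Cmod_sq_le_N1 x : Cmod x ^ 2 <= N1 x ^ 2.
Proof. rewrite Cmod_sq. unfold N1. pose proof (Rabs_pos (Cre x)); pose proof (Rabs_pos (Cim x)).
  assert (Cre x ^ 2 = Rabs (Cre x) ^ 2) by (rewrite <- !Rsqr_pow2; apply Rsqr_abs).
  assert (Cim x ^ 2 = Rabs (Cim x) ^ 2) by (rewrite <- !Rsqr_pow2; apply Rsqr_abs). nra. Qed.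

Lemma Rsumn_delta N p g : Rsumn N (fun i => if Nat.eqb i p then g i else 0) = if Nat.ltb p N then g p else 0.
Proof. induction N; simpl; auto. rewrite IHN.
  destruct (Nat.eqb_spec N p); destruct (Nat.ltb_spec p N); destruct (Nat.ltb_spec p (S N)); subst; try lia; ring. Qed.

Lemma vnorm_scale_delta d z b : (b < d)%nat -> vnorm d (fun i => Cmul z (delta b i)) = Cmod z.
Proof. intros. unfold vnorm.
  rewrite (Rsumn_ext d _ (fun i => if Nat.eqb i b then Cmod z ^ 2 else 0)).
  rewrite Rsumn_delta. apply Nat.ltb_lt in H. rewrite H. rewrite sqrt_pow2; auto. apply Cmod_ge0.
  intros. unfold delta. destruct (Nat.eqb i b). replace (Cmul z C1) with z by Cring. auto.
  replace (Cmul z C0) with C0 by Cring. unfold Cmod; simpl. replace (0 * (0 * 1) + 0 * (0 * 1)) with 0 by ring. rewrite sqrt_0. ring. Qed.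

Lemma vnorm_delta d b : (b < d)%nat -> vnorm d (delta b) = 1.
Proof. intros. rewrite <- Cmod_C1. rewrite <- (vnorm_scale_delta d C1 b); auto.
  f_equal. extensionality i. Cring. Qed.

Lemma opnorm_ge d A v : vnorm d v = 1 -> vnorm d (Mapply d A v) <= opnorm d A.
Proof. intros Hv. set (P := fun x => exists v : Vec, vnorm d v = 1 /\ x = vnorm d (Mapply d A v)).
  set (bnd := fun i => 2 * Rsumn d (fun k => N1 (A i k))).
  assert (Hb : forall u, vnorm d u = 1 -> vnorm d (Mapply d A u) <= sqrt (Rsumn d (fun i => bnd i ^ 2))).
  { intros u Hu. unfold vnorm in *. apply sqrt_le_1_alt.
    assert (Hs : Rsumn d (fun i => Cmod (u i) ^ 2) = 1).
    { assert (0 <= Rsumn d (fun i => Cmod (u i) ^ 2)) by (apply Rsumn_nonneg; intros; apply pow2_ge_0).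
      rewrite <- (sqrt_def (Rsumn d (fun i => Cmod (u i) ^ 2))); auto. rewrite Hu. ring. }
    assert (Hu2 : forall k, (k < d)%nat -> N1 (u k) <= 2).
    { intros. assert (Cmod (u k) ^ 2 <= 1).
      { rewrite <- Hs. apply (Rsumn_term_le d (fun i => Cmod (u i) ^ 2)); auto. intros; apply pow2_ge_0. }
      rewrite Cmod_sq in H0. unfold N1.
      assert (Rabs (Cre (u k)) <= 1). { apply Rabs_le. nra. }
      assert (Rabs (Cim (u k)) <= 1). { apply Rabs_le. nra. } lra. }
    apply Rsumn_le; intros i Hi. eapply Rle_trans. apply Cmod_sq_le_N1.
    assert (0 <= N1 (Mapply d A u i)) by apply N1_ge0.
    assert (N1 (Mapply d A u i) <= bnd i).
    { unfold Mapply, bnd. eapply Rle_trans. apply N1_Csum. rewrite <- Rsumn_scal. apply Rsumn_le; intros.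
      eapply Rle_trans. apply N1_mul. pose proof (N1_ge0 (A i i0)). pose proof (Hu2 i0 H0). pose proof (N1_ge0 (u i0)). nra. }
    nra. }
  assert (Hlub : is_lub P (opnorm d A)).
  { unfold opnorm, Rsup. apply (epsilon_spec (inhabits 0) (fun l => is_lub P l)).
    destruct (completeness P) as [m Hm].
    - exists (sqrt (Rsumn d (fun i => bnd i ^ 2))). intros x [u [Hu ->]]. apply Hb; auto.
    - exists (vnorm d (Mapply d A v)). exists v; auto.
    - exists m; auto. }
  apply Hlub. exists v; auto. Qed.


Lemma I0 m n nu s :
  Mapply (hdim m n) (Mexp (hdim m n) (Mscale s (Hchain m n nu))) (delta (om (nsites m n))) =
  Vscale (ex (Cmul s (Esum (nsites m n) (fun k => nu (m + Z.of_nat k)%Z)))) (delta (om (nsites m n))).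
Proof. rewrite Hchain_eq. set (N := nsites m n). set (w := fun k => nu (m + Z.of_nat k)%Z).
  unfold hdim. fold N.
  pose proof (intertw_exp (2^N) 1 (Mscale s (Hab N w)) (fun _ _ => Cmul s (Esum N w)) (fun _ => om N)) as E.
  cbv beta in E. rewrite (E ltac:(intros; apply om_lt)) with (j := 0%nat); try lia.
  - extensionality a. unfold Vsum, Vscale. simpl. rewrite Mexp1. Cring.
  - intros. rewrite Mapply_scale, H_om. extensionality a. unfold Vsum, Vscale. simpl. Cring. Qed.

Lemma I1 m n nu s j : (j < nsites m n)%nat ->
  Mapply (hdim m n) (Mexp (hdim m n) (Mscale s (Hchain m n nu))) (delta (phi (nsites m n) j)) =
  Vsum (nsites m n) (fun q => Vscale (Mexp (nsites m n) (Mscale s (Kmat (nsites m n) (fun k => nu (m + Z.of_nat k)%Z))) q j)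
     (delta (phi (nsites m n) q))).
Proof. intros Hj. rewrite Hchain_eq. set (N := nsites m n) in *. set (w := fun k => nu (m + Z.of_nat k)%Z).
  unfold hdim. fold N.
  rewrite (intertw_exp (2^N) N (Mscale s (Hab N w)) (Mscale s (Kmat N w)) (phi N)) with (j := j); auto.
  - intros. apply phi_lt.
  - intros. rewrite Mapply_scale, H_phi; auto. extensionality a. unfold Vsum, Vscale, Mscale.
    rewrite <- Csum_scal. apply Csum_ext; intros. Cring. Qed.

Lemma Heffab_sym N w p q : Heffab N w p q = Heffab N w q p.
Proof. unfold Heffab.
  repeat match goal with |- context [Nat.eqb ?a ?b] => destruct (Nat.eqb_spec a b)
           | |- context [Nat.ltb ?a ?b] => destruct (Nat.ltb_spec a b) end; simpl; subst; try lia; auto. Qed.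

Lemma Heffab_real N w p q : Cim (Heffab N w p q) = 0.
Proof. unfold Heffab. destruct (Nat.ltb p N && Nat.ltb q N)%bool; auto.
  destruct (Nat.eqb p q); auto. destruct (Nat.eqb p (S q) || Nat.eqb q (S p))%bool; auto. Qed.

Lemma Z_loc_lt m n l : (m <= l)%Z -> (l <= n)%Z -> (loc m l < nsites m n)%nat.
Proof. intros. unfold loc, nsites. apply Nat2Z.inj_lt. rewrite !Z2Nat.id; lia. Qed.

Theorem proposition6p3 (m n : Z) (nu : Z -> R) (l r : Z) (t : R) :
  (m <= l)%Z -> (l <= r)%Z -> (r <= n)%Z ->
  opnorm (hdim m n) (Mcomm (hdim m n) (c_t m n nu l t) (adag m n r))
  >= Cmod (inner (nsites m n)
             (Mapply (nsites m n)
                (Mexp (nsites m n) (Mscale (mkC 0 (-2 * t)) (Heff m n nu)))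
                (delta (loc m l)))
             (delta (loc m r))).
Proof. intros Hml Hlr Hrn.
  assert (Hl : (loc m l < nsites m n)%nat) by (apply Z_loc_lt; lia).
  assert (Hr : (loc m r < nsites m n)%nat) by (apply Z_loc_lt; lia).
  set (N := nsites m n) in *. set (w := fun k => nu (m + Z.of_nat k)%Z).
  set (l0 := loc m l) in *. set (r0 := loc m r) in *.
  set (E := Esum N w).
  set (Y := Mscale (mkC 0 (-2 * t)) (Heffab N w)).
  set (gam := Mexp N (Mscale (mkC 0 (- t)) (Kmat N w)) l0 r0).
  set (zz := zs (om N) l0).
  set (bet := ex (Cmul (mkC 0 t) E)).
  assert (Hvec : Mapply (hdim m n) (Mcomm (hdim m n) (c_t m n nu l t) (adag m n r)) (delta (om N)) =
                 fun i => Cmul (Cmul (Cmul gam zz) bet) (delta (om N) i)).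
  { unfold Mcomm, Msub, c_t. cbv zeta.
    rewrite Mapply_add, Mapply_opp, !Mapply_mul.
    rewrite adag_om by auto. fold N l0 r0.
    rewrite I0, I1 by auto. fold w E.
    rewrite Mapply_vscale, cJW_om by auto. fold N.
    rewrite Mapply_vsum.
    rewrite (Vsum_ext N _ (fun q => Vscale (Mexp N (Mscale (mkC 0 (- t)) (Kmat N w)) q r0)
        (Vscale (if Nat.eqb q l0 then zz else C0) (delta (om N))))).
    2:{ intros. rewrite Mapply_vscale, cJW_phi; auto. }
    replace (Vsum N (fun q => Vscale (Mexp N (Mscale (mkC 0 (- t)) (Kmat N w)) q r0)
        (Vscale (if Nat.eqb q l0 then zz else C0) (delta (om N))))) with (Vscale (Cmul gam zz) (delta (om N))).
    2:{ extensionality a. unfold Vsum, Vscale.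
        transitivity (Csum N (fun q => if Nat.eqb q l0 then Cmul (Cmul (Mexp N (Mscale (mkC 0 (- t)) (Kmat N w)) q r0) zz) (delta (om N) a) else C0)).
        rewrite Csum_delta. apply Nat.ltb_lt in Hl. rewrite Hl. reflexivity.
        apply Csum_ext; intros q _. destruct (Nat.eqb q l0); Cring. }
    rewrite Mapply_vscale, I0. fold w E.
    replace (Mapply (hdim m n) (Mexp (hdim m n) (Mscale (mkC 0 t) (Hchain m n nu))) (Vscale (ex (Cmul (mkC 0 (- t)) E)) Vzero)) with Vzero.
    2:{ replace (Vscale (ex (Cmul (mkC 0 (- t)) E)) Vzero) with Vzero. rewrite Mapply_vzero; auto.
        extensionality a; unfold Vscale, Vzero; Cring. }
    rewrite Mapply_vzero. extensionality a. unfold Vadd, Vscale, Vzero. unfold bet, E, N. Cring. }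
  assert (Hgam : gam = Cmul (ex (Copp (Cmul (mkC 0 t) E))) (Cconj (Mexp N Y r0 l0))).
  { unfold gam. replace (Mscale (mkC 0 (- t)) (Kmat N w)) with (Xs (Copp (Cmul (mkC 0 t) E)) (Mconj Y)).
    rewrite shift by auto. f_equal. rewrite Mexp_conj by auto. f_equal. apply Mexp_sym; auto.
    intros. unfold Y, Mscale. rewrite Heffab_sym. auto.
    extensionality p; extensionality q. unfold Xs, Madd, Mscale, Mid, Mconj, Y, Kmat.
    apply Cext; simpl; rewrite Heffab_real; unfold E; destruct (Nat.eqb p q); simpl; ring. }
  assert (Hzz : Cmod zz = 1).
  { unfold Cmod, zz. rewrite (zs_om_mod N l0) by lia. apply sqrt_1. }
  assert (Hrhs : inner N (Mapply N (Mexp N (Mscale (mkC 0 (-2 * t)) (Heff m n nu))) (delta l0)) (delta r0)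
                 = Cconj (Mexp N Y r0 l0)).
  { rewrite Heff_eq. fold N w Y. rewrite Mapply_delta by auto. unfold inner, delta.
    transitivity (Csum N (fun i => if Nat.eqb i r0 then Cconj (Mexp N Y i l0) else C0)).
    apply Csum_ext; intros i _. destruct (Nat.eqb i r0); Cring.
    rewrite Csum_delta. apply Nat.ltb_lt in Hr. rewrite Hr. reflexivity. }
  rewrite Hrhs. apply Rle_ge.
  eapply Rle_trans. 2: apply (opnorm_ge _ _ (delta (om N))).
  2:{ apply vnorm_delta. unfold hdim. apply om_lt. }
  rewrite Hvec. rewrite vnorm_scale_delta. 2:{ unfold hdim. apply om_lt. }
  rewrite Hgam, !Cmod_mul, Hzz.
  replace (Cmod (ex (Copp (Cmul (mkC 0 t) E))) * Cmod (Cconj (Mexp N Y r0 l0)) * 1 * Cmod bet)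
    with (Cmod (Cmul bet (ex (Copp (Cmul (mkC 0 t) E)))) * Cmod (Cconj (Mexp N Y r0 l0))) by (rewrite Cmod_mul; ring).
  unfold bet. rewrite ex_inv, Cmod_C1. lra. Qed.
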